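(* Let $\mathsf G=(A_\star,B,C,D)$ with $A_\star=SJ_\star S^{-1}$ its Jordan decomposition and $\rho(A_\star)\le1$. Then for all $n\ge1$, \[ \|\mathcal M_n(\mathsf G)\|_{\mathrm{op}}\le\|\mathcal M_{n+1}(\mathsf G)\|_{\mathrm{op}}\le\|D\|_{\mathrm{op}}+\|S^{-1}B\|_{\mathrm{op}}\|CS\|_{\mathrm{op}}K_2(n). \]
   Context: $\mathcal M_k(\mathsf G):=[D|CB|CA_\star B|\dots|CA_\star^{k-2}B]$. $\mathsf{blkspec}(A_\star)$ is the set of pairs $(\lambda,k)$ with $\lambda$ an eigenvalue of $A_\star$ and $k$ the size of an associated Jordan block. Define $\widetilde M(k,N):=N^{1/2}$ if $k=1$; $N^{k-1/2}\big(\frac e{k-1}\big)^{k-1}$ if $2\le k\le N+1$; $N^{1/2}2^N$ if $k\ge N+1$. Define $M(k,\lambda,N):=\min\{\frac{k}{(1-|\lambda|)^{k-1/2}},\widetilde M(k,N)\}$ if $0\le|\lambda|<1$ and $\widetilde M(k,N)$ if $|\lambda|=1$. $K_2(N):=\max_{(\lambda,k)\in\mathsf{blkspec}(A_\star)}M(k,\lambda,N)$. *)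

(* Defs.v *)
From HB Require Import structures.
From mathcomp Require Import all_boot all_order all_algebra.
From mathcomp Require Import all_classical all_reals all_analysis.
From mathcomp Require Import complex.
Set Implicit Arguments. Unset Strict Implicit. Unset Printing Implicit Defensive.
Import Order.TTheory GRing.Theory Num.Theory.
Local Open Scope ring_scope.
Local Open Scope classical_set_scope.

Section Defs.
Variable R : realType.
Local Notation C := R[i].

Definition cmod (z : C) : R :=
  Num.sqrt (complex.Re z ^+ 2 + complex.Im z ^+ 2).

Definition vnorm (q : nat) (x : 'cV[C]_q) : R :=
  Num.sqrt (\sum_(i < q) (cmod (x i 0)) ^+ 2).

Definition opnorm (p q : nat) (M : 'M[C]_(p, q)) : R :=
  sup [set vnorm (M *m x) | x in [set x : 'cV[C]_q | vnorm x <= 1]].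

(* spectral radius: largest modulus of an eigenvalue (0 if there are none) *)
Definition spectral_radius (d : nat) (A : 'M[C]_d) : R :=
  sup [set cmod a | a in [set a : C | eigenvalue A a]].

Definition jordan_block (lam : C) (k : nat) : 'M[C]_k :=
  \matrix_(i < k, j < k)
     (if i == j :> nat then lam else if j == i.+1 :> nat then 1 else 0).

Definition jordan_mx (r : nat) (lam : 'I_r -> C) (k : 'I_r -> nat)
  : 'M[C]_(\sum_(i < r) k i) :=
  \mxdiag_(i < r) jordan_block (lam i) (k i).

Definition markov_mx (d m p n : nat) (A : 'M[C]_d) (B : 'M[C]_(d, m))
  (Cm : 'M[C]_(p, d)) (D : 'M[C]_(p, m)) : 'M[C]_(p, \sum_(j < n) m) :=
  \mxrow_(j < n) (if j == 0 :> nat then D else Cm *m A ^+ j.-1 *m B).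

Definition Mtilde (k N : nat) : R :=
  if k == 1%N then Num.sqrt N%:R
  else if (2 <= k <= N.+1)%N then
    N%:R `^ (k%:R - 2^-1) * (expR 1 / (k.-1)%:R) ^+ k.-1
  else Num.sqrt N%:R * 2 ^+ N.

Definition Mbound (k : nat) (lam : C) (N : nat) : R :=
  if cmod lam < 1 then
    Num.min (k%:R / (1 - cmod lam) `^ (k%:R - 2^-1)) (Mtilde k N)
  else Mtilde k N.

Definition K2 (r : nat) (lam : 'I_r -> C) (k : 'I_r -> nat) (N : nat) : R :=
  \big[Num.max/0]_(i < r) Mbound (k i) (lam i) N.

End Defs.

(* Main.v *)
Require Import Defs.
From HB Require Import structures.
From mathcomp Require Import all_boot all_order all_algebra.
From mathcomp Require Import all_classical all_reals all_analysis.
From mathcomp Require Import complex.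
From mathcomp Require Import ring lra.
Import Order.TTheory GRing.Theory Num.Theory.
Local Open Scope ring_scope.

Section Scalar.
Context {R : realType}.

Lemma CS_sum (I : finType) (a b : I -> R) :
  (\sum_i a i * b i) ^+ 2 <= (\sum_i a i ^+ 2) * (\sum_i b i ^+ 2).
Proof.
set S := \sum_i a i * b i; set A := \sum_i a i ^+ 2; set B := \sum_i b i ^+ 2.
have A0 : 0 <= A by apply: sumr_ge0 => i _; exact: sqr_ge0.
have E : \sum_i (S * a i - A * b i) ^+ 2 = A * (A * B - S ^+ 2).
  transitivity (\sum_i (S ^+ 2 * a i ^+ 2 - (2 * S * A) * (a i * b i) + A ^+ 2 * b i ^+ 2)).
    by apply: eq_bigr => i _; ring.
  rewrite big_split /= sumrB -!mulr_sumr -/S -/A -/B; ring.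
have [A0'|Apos] := eqVneq A 0.
  have ai0 : forall i, a i = 0.
    move=> i; apply/eqP; rewrite -sqrf_eq0; apply/eqP.
    exact: (@psumr_eq0P _ _ xpredT (fun j => a j ^+ 2) (fun j _ => sqr_ge0 (a j)) A0' i isT).
  have -> : S = 0 by rewrite /S big1 // => i _; rewrite ai0 mul0r.
  by rewrite A0' expr0n /= mul0r.
have Ap : 0 < A by rewrite lt_def Apos A0.
have : 0 <= A * (A * B - S ^+ 2).
  by rewrite -E; apply: sumr_ge0 => i _; exact: sqr_ge0.
by rewrite pmulr_rge0 // subr_ge0.
Qed.

Lemma sum_nat_mono (f : nat -> R) (m n : nat) :
  (forall i, 0 <= f i) -> (m <= n)%N -> \sum_(i < m) f i <= \sum_(i < n) f i.
Proof.
move=> f0 mn; rewrite -!(big_mkord xpredT) (big_cat_nat (leq0n m) mn) /=.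
by rewrite lerDl; apply: sumr_ge0 => i _.
Qed.

End Scalar.

Section Binom.
Context {R : realType}.
Implicit Types rho : R.

Definition Tsum rho (i N : nat) := \sum_(j < N) 'C(j, i)%:R * rho ^+ (j - i).

Lemma Tsum_ge0 rho i N : 0 <= rho -> 0 <= Tsum rho i N.
Proof. by move=> r0; apply: sumr_ge0 => j _; rewrite mulr_ge0 ?exprn_ge0. Qed.

Lemma Tsum_mono rho i N : 0 <= rho -> Tsum rho i N <= Tsum rho i N.+1.
Proof.
move=> r0; rewrite /Tsum big_ord_recr /= lerDl.
by rewrite mulr_ge0 ?exprn_ge0.
Qed.

Lemma Tsum_S0 rho N : Tsum rho 0 N.+1 = rho * Tsum rho 0 N + 1.
Proof.
rewrite /Tsum big_ord_recl /= bin0 subn0 expr0 mulr1 addrC; congr (_ + _).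
rewrite mulr_sumr; apply: eq_bigr => j _; rewrite /bump /= !bin0 !subn0 add1n.
by rewrite exprS; ring.
Qed.

Lemma Tsum_S rho i N : Tsum rho i.+1 N.+1 = rho * Tsum rho i.+1 N + Tsum rho i N.
Proof.
rewrite /Tsum big_ord_recl /= bin0n mul0r add0r.
under eq_bigr => j _ do rewrite /bump /= add1n binS natrD subSS mulrDl.
rewrite big_split /=; congr (_ + _).
rewrite mulr_sumr; apply: eq_bigr => j _.
case: (ltnP i j) => h.
  by rewrite -(subnSK h) exprS; ring.
by rewrite bin_small ?ltnS // !mul0r mulr0.
Qed.

Lemma Tsum_bound rho i N : 0 <= rho -> rho < 1 ->
  (1 - rho) ^+ i.+1 * Tsum rho i N <= 1.
Proof.
move=> r0 r1; elim: i N => [|i IH] N.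
  have h := Tsum_mono rho 0 N r0; rewrite Tsum_S0 in h.
  rewrite expr1 mulrBl mul1r; lra.
have h := Tsum_mono rho i.+1 N r0; rewrite Tsum_S in h.
have h2 : (1 - rho) * Tsum rho i.+1 N <= Tsum rho i N.
  rewrite mulrBl mul1r; lra.
rewrite exprSr -mulrA (le_trans _ (IH N)) //.
by rewrite ler_wpM2l // exprn_ge0 // subr_ge0 ltW.
Qed.

Lemma binprob rho j i : 0 <= rho -> rho <= 1 ->
  'C(j, i)%:R * rho ^+ (j - i) * (1 - rho) ^+ i <= 1.
Proof.
move=> r0 r1; case: (leqP i j) => ij; last by rewrite bin_small // !mul0r.
have E := exprDn rho (1 - rho) j.
rewrite addrC subrK expr1n in E.
have ij' : (i < j.+1)%N by rewrite ltnS.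
rewrite (bigD1 (Ordinal ij')) //= in E.
rewrite [X in _ <= X]E /= -[X in X <= _]mulrA mulr_natl lerDl.
apply: sumr_ge0 => l _; rewrite mulrn_wge0 // mulr_ge0 ?exprn_ge0 //.
by rewrite subr_ge0.
Qed.

Definition acoef rho (k j : nat) :=
  \sum_(i < j.+1) 'C(j, i)%:R * rho ^+ (j - i) * (i < k)%:R.
Definition bcoef rho (k j : nat) :=
  \sum_(i < k) 'C(j, i)%:R * rho ^+ (j - i).

Lemma acoef_ge0 rho k j : 0 <= rho -> 0 <= acoef rho k j.
Proof. by move=> r0; apply: sumr_ge0 => i _; rewrite !mulr_ge0 ?exprn_ge0. Qed.

Lemma acoefE rho k j : acoef rho k j = bcoef rho k j.
Proof.
rewrite /acoef /bcoef.
rewrite (big_ord_widen (j.+1 + k) (fun i => 'C(j, i)%:R * rho ^+ (j - i) * (i < k)%:R) (leq_addr k j.+1)).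
rewrite (big_ord_widen (j.+1 + k) (fun i => 'C(j, i)%:R * rho ^+ (j - i)) (leq_addl j.+1 k)).
rewrite [LHS]big_mkcond [RHS]big_mkcond; apply: eq_bigr => i _.
case: (ltnP i j.+1) => h1; case: (ltnP i k) => h2 //=; rewrite ?mulr1 ?mulr0 //.
by rewrite bin_small // mul0r.
Qed.

Lemma acoef_le2 rho k j : 0 <= rho -> rho <= 1 -> acoef rho k j <= 2 ^+ j.
Proof.
move=> r0 r1.
have E := exprDn (1 : R) 1 j.
have -> : (2 : R) ^+ j = \sum_(i < j.+1) 'C(j, i)%:R.
  rewrite (_ : (2 : R) = 1 + 1) // E; apply: eq_bigr => i _.
  by rewrite !expr1n mulr1.
apply: ler_sum => i _.
rewrite -[X in _ <= X]mulr1 -mulrA ler_wpM2l //.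
rewrite -[1]mulr1 ler_pM ?exprn_ge0 ?exprn_ile1 //.
by rewrite mulr1; case: (i < k)%N.
Qed.

Lemma bcoef_ge0 rho k j : 0 <= rho -> 0 <= bcoef rho k j.
Proof. by move=> r0; apply: sumr_ge0 => i _; rewrite !mulr_ge0 ?exprn_ge0. Qed.

End Binom.

Section Cases.
Context {R : realType}.

Lemma sqrt_sum_le (N : nat) (a : 'I_N -> R) (Q : R) : 0 <= Q ->
  (forall j, 0 <= a j <= Q) ->
  Num.sqrt (\sum_j a j ^+ 2) <= Num.sqrt N%:R * Q.
Proof.
move=> Q0 aQ.
rewrite -[Q]ger0_norm // -sqrtr_sqr -sqrtrM ?ler0n // ler_sqrt ?mulr_ge0 ?ler0n ?sqr_ge0 //.
apply: (le_trans (y := \sum_(j < N) Q ^+ 2)).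
  apply: ler_sum => j _; have /andP[h1 h2] := aQ j.
  by rewrite lerXn2r // nnegrE.
by rewrite sumr_const card_ord mulr_natl.
Qed.

Lemma cmod_ge0 (z : R[i]) : 0 <= cmod z.
Proof. exact: sqrtr_ge0. Qed.

Lemma powR_half (x : R) (K : nat) : 0 < x ->
  x `^ (K.+1%:R - 2^-1) = x ^+ K * Num.sqrt x.
Proof.
move=> x0.
have -> : K.+1%:R - 2^-1 = K%:R + 2^-1 :> R by rewrite mulrSr; lra.
rewrite powRD; last by apply/implyP => _; rewrite gt_eqF.
by rewrite powR_mulrn ?ltW // powR12_sqrt // ltW.
Qed.

Lemma binsum_bound K N : (0 < K)%N -> (K <= N)%N ->
  \sum_(i < K.+1) 'C(N, i)%:R <= (expR 1 / K%:R) ^+ K * N%:R ^+ K :> R.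
Proof.
move=> K0 KN.
have N0 : (0 < N)%N by apply: leq_trans KN.
have Kr : 0 < K%:R :> R by rewrite ltr0n.
have Nr : 0 < N%:R :> R by rewrite ltr0n.
set y : R := K%:R / N%:R.
have y0 : 0 < y by rewrite divr_gt0.
have y1 : y <= 1 by rewrite ler_pdivrMr // mul1r ler_nat.
have H1 : (\sum_(i < K.+1) 'C(N, i)%:R) * y ^+ K <= \sum_(i < K.+1) 'C(N, i)%:R * y ^+ i.
  rewrite mulr_suml; apply: ler_sum => i _; rewrite ler_wpM2l //.
  by apply: ler_wiXn2l => //; [exact: ltW | rewrite -ltnS].
have H2 : \sum_(i < K.+1) 'C(N, i)%:R * y ^+ i <= \sum_(i < N.+1) 'C(N, i)%:R * y ^+ i.
  apply: (@sum_nat_mono R (fun i => 'C(N, i)%:R * y ^+ i)) => //.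
  by move=> i; rewrite mulr_ge0 // exprn_ge0 // ltW.
have H3 : \sum_(i < N.+1) 'C(N, i)%:R * y ^+ i = (1 + y) ^+ N.
  rewrite exprDn; apply: eq_bigr => i _; by rewrite expr1n mul1r mulr_natl.
have H4 : (1 + y) ^+ N <= expR 1 ^+ K.
  apply: (le_trans (y := expR y ^+ N)).
    apply: lerXn2r; last exact: expR_ge1Dx.
      by rewrite nnegrE addr_ge0 // ltW.
    by rewrite nnegrE expR_ge0.
  rewrite -expRM_natl /y mulrC divfK ?gt_eqF //.
  by rewrite -[K%:R]mulr1 expRM_natl.
have H : (\sum_(i < K.+1) 'C(N, i)%:R) * y ^+ K <= expR 1 ^+ K.
  by apply: (le_trans H1); apply: (le_trans H2); rewrite H3.
have yK : 0 < y ^+ K by rewrite exprn_gt0.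
rewrite -(ler_pM2r yK) (le_trans H) //.
rewrite le_eqVlt; apply/orP; left; apply/eqP.
rewrite /y !expr_div_n.
field; apply/andP; split; rewrite expf_neq0 // gt_eqF //.
Qed.

End Cases.

Section Main.
Context {R : realType}.

Lemma Mtilde_bound (rho : R) K N : 0 <= rho -> rho <= 1 -> (0 < N)%N ->
  Num.sqrt (\sum_(j < N) acoef rho K.+1 j ^+ 2) <= Mtilde R K.+1 N.
Proof.
move=> r0 r1 N0.
have a0 : forall j, 0 <= acoef rho K.+1 j by move=> j; exact: acoef_ge0.
rewrite /Mtilde; move: a0; case: K => [|K] a0 /=.
  rewrite -[X in _ <= X]mulr1; apply: sqrt_sum_le => // j.
  rewrite a0 /= acoefE /bcoef big_ord1 /= bin0 mul1r.
  exact: exprn_ile1.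
case: ifP => hK.
  have KN : (K.+1 <= N)%N by move: hK; rewrite !ltnS.
  rewrite powR_half ?ltr0n //.
  pose Q : R := (expR 1 / K.+1%:R) ^+ K.+1 * N%:R ^+ K.+1.
  have Q0 : 0 <= Q by rewrite mulr_ge0 ?exprn_ge0 ?divr_ge0 ?expR_ge0 ?ler0n.
  apply: (le_trans (@sqrt_sum_le R N _ Q Q0 _)).
    move=> j; rewrite a0 /= acoefE.
    rewrite /Q; apply: (le_trans _ (binsum_bound K.+1 N _ KN)) => //.
    apply: ler_sum => i _.
    rewrite -[X in _ <= X]mulr1 ler_pM ?exprn_ge0 ?exprn_ile1 //.
    by rewrite ler_nat leq_bin2l // ltnW.
  by rewrite le_eqVlt; apply/orP; left; apply/eqP; rewrite /Q; ring.
apply: sqrt_sum_le; first by rewrite exprn_ge0.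
move=> j; rewrite a0 /=; apply: (le_trans (acoef_le2 _ _ _ r0 r1)).
by apply: ler_weXn2l; [rewrite ler1n | exact: ltnW (ltn_ord j)].
Qed.

End Main.

Section Main2.
Context {R : realType}.

Lemma X_bound (rho : R) K N : 0 <= rho -> rho < 1 ->
  Num.sqrt (\sum_(j < N) acoef rho K.+1 j ^+ 2) <=
    K.+1%:R / (1 - rho) `^ (K.+1%:R - 2^-1).
Proof.
move=> r0 r1.
have p0 : 0 < 1 - rho by rewrite subr_gt0.
set t := 1 - rho in p0 *.
set u := t^-1.
have u1 : 1 <= u by rewrite /u invf_ge1 // /t; lra.
have u0 : 0 <= u by apply: le_trans u1.
have ui : forall i, u ^+ i = (t ^+ i)^-1 by move=> i; rewrite /u exprVn.
have Hc : forall j i, 'C(j, i)%:R * rho ^+ (j - i) <= u ^+ i.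
  move=> j i; rewrite ui -div1r ler_pdivlMr ?exprn_gt0 //.
  exact: (binprob _ _ _ r0 (ltW r1)).
have Hb1 : forall j, bcoef rho K.+1 j <= K.+1%:R * u ^+ K.
  move=> j; apply: (le_trans (y := \sum_(i < K.+1) u ^+ K)).
    apply: ler_sum => i _; apply: (le_trans (Hc j i)).
    by apply: ler_weXn2l => //; rewrite -ltnS.
  by rewrite sumr_const card_ord mulr_natl.
have Hb2 : \sum_(j < N) bcoef rho K.+1 j <= K.+1%:R * u ^+ K.+1.
  rewrite /bcoef exchange_big /=.
  apply: (le_trans (y := \sum_(i < K.+1) u ^+ K.+1)); last first.
    by rewrite sumr_const card_ord mulr_natl.
  apply: ler_sum => i _.
  apply: (le_trans (y := u ^+ i.+1)); last by apply: ler_weXn2l.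
  have := Tsum_bound rho i N r0 r1; rewrite /Tsum -/t.
  by rewrite ui -div1r ler_pdivlMr ?exprn_gt0 // mulrC.
have b0 : forall j, 0 <= bcoef rho K.+1 j by move=> j; exact: bcoef_ge0.
have HS : \sum_(j < N) acoef rho K.+1 j ^+ 2 <= K.+1%:R * u ^+ K.+1 * (K.+1%:R * u ^+ K).
  apply: (le_trans (y := \sum_(j < N) bcoef rho K.+1 j * (K.+1%:R * u ^+ K))).
    apply: ler_sum => j _; rewrite acoefE expr2 ler_wpM2l //.
  by rewrite -mulr_suml ler_wpM2r // mulr_ge0 ?ler0n ?exprn_ge0.
rewrite powR_half // -/t.
have s0 : 0 < Num.sqrt t by rewrite sqrtr_gt0.
set X := K.+1%:R / (t ^+ K * Num.sqrt t).
have X0 : 0 <= X by rewrite /X divr_ge0 ?ler0n // mulr_ge0 ?exprn_ge0 ?ltW.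
rewrite -[X]ger0_norm // -sqrtr_sqr ler_sqrt ?sqr_ge0 //.
apply: (le_trans HS); rewrite le_eqVlt; apply/orP; left; apply/eqP.
rewrite /X expr_div_n exprMn sqr_sqrtr ?ltW // !ui exprS.
field; rewrite ?expf_neq0 ?gt_eqF //.
Qed.

Lemma Mbound_bound (lam : R[i]) K N : cmod lam <= 1 -> (0 < N)%N ->
  Num.sqrt (\sum_(j < N) acoef (cmod lam) K.+1 j ^+ 2) <= Mbound K.+1 lam N.
Proof.
move=> l1 N0; have l0 := cmod_ge0 lam.
rewrite /Mbound; case: ifP => h; last exact: Mtilde_bound.
by rewrite le_min X_bound // Mtilde_bound.
Qed.

End Main2.

Section Vec.
Context {R : realType}.
Local Notation C := R[i].

Lemma cmodE (z : C) : cmod z = Normc.normc z.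
Proof. by case: z. Qed.

Lemma cmodD (a b : C) : cmod (a + b) <= cmod a + cmod b.
Proof. rewrite !cmodE; exact: le_normcD. Qed.

Lemma cmodM (a b : C) : cmod (a * b) = cmod a * cmod b.
Proof. by rewrite !cmodE Normc.normcM. Qed.

Lemma cmod0 : cmod (0 : C) = 0.
Proof. by rewrite cmodE Normc.normc0. Qed.

Lemma cmod1 : cmod (1 : C) = 1.
Proof. by rewrite cmodE Normc.normc1. Qed.

Lemma cmod_eq0 (z : C) : cmod z = 0 -> z = 0.
Proof. rewrite cmodE; exact: Normc.eq0_normc. Qed.

Lemma cmod_real (x : R) : 0 <= x -> cmod ((x%:C)%C) = x.
Proof.
move=> x0; rewrite /cmod /= expr0n /= addr0 sqrtr_sqr ger0_norm //.
Qed.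

Lemma cmod_nat n : cmod (n%:R : C) = n%:R.
Proof. by rewrite -(rmorph_nat (real_complex R)) cmod_real ?ler0n. Qed.

Lemma cmodX (z : C) n : cmod (z ^+ n) = cmod z ^+ n.
Proof. by elim: n => [|n IH]; rewrite ?expr0 ?cmod1 // !exprS cmodM IH. Qed.

Lemma CS_sqrt (I : finType) (a b : I -> R) :
  \sum_i a i * b i <= Num.sqrt (\sum_i a i ^+ 2) * Num.sqrt (\sum_i b i ^+ 2).
Proof.
rewrite -sqrtrM; last by apply: sumr_ge0 => i _; exact: sqr_ge0.
apply: (le_trans (ler_norm _)); rewrite -sqrtr_sqr ler_sqrt ?CS_sum //.
by rewrite mulr_ge0 // sumr_ge0 // => i _; exact: sqr_ge0.
Qed.

Lemma sqrt_le_sum (S a : R) : 0 <= a -> S <= a ^+ 2 -> Num.sqrt S <= a.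
Proof.
by move=> a0 Sa; rewrite -[a]ger0_norm // -sqrtr_sqr ler_sqrt ?sqr_ge0.
Qed.

Lemma vnorm_ge0 q (x : 'cV[C]_q) : 0 <= vnorm x.
Proof. exact: sqrtr_ge0. Qed.

Lemma vnorm_sqr q (x : 'cV[C]_q) : vnorm x ^+ 2 = \sum_i cmod (x i 0) ^+ 2.
Proof. by rewrite sqr_sqrtr // sumr_ge0 // => i _; exact: sqr_ge0. Qed.

Lemma vnormD q (x y : 'cV[C]_q) : vnorm (x + y) <= vnorm x + vnorm y.
Proof.
apply: sqrt_le_sum; first by rewrite addr_ge0 ?vnorm_ge0.
apply: (le_trans (y := \sum_i (cmod (x i 0) + cmod (y i 0)) ^+ 2)).
  apply: ler_sum => i _; rewrite mxE lerXn2r ?nnegrE ?cmodD ?cmod_ge0 //.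
  by rewrite addr_ge0 ?cmod_ge0.
have := CS_sqrt _ (fun i => cmod (x i 0)) (fun i => cmod (y i 0)).
rewrite -/(vnorm x) -/(vnorm y) => h.
have -> : \sum_i (cmod (x i 0) + cmod (y i 0)) ^+ 2 =
   \sum_i cmod (x i 0) ^+ 2 + \sum_i cmod (y i 0) ^+ 2 + 2 * \sum_i cmod (x i 0) * cmod (y i 0).
  rewrite mulr_sumr -!big_split /=; apply: eq_bigr => i _; ring.
rewrite -!vnorm_sqr; nra.
Qed.

Lemma vnormZ q (c : C) (x : 'cV[C]_q) : vnorm (c *: x) = cmod c * vnorm x.
Proof.
rewrite /vnorm.
under eq_bigr => i _ do rewrite mxE cmodM exprMn.
rewrite -mulr_sumr sqrtrM ?sqr_ge0 // sqrtr_sqr ger0_norm //; exact: cmod_ge0.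
Qed.

Lemma vnorm0 q : vnorm (0 : 'cV[C]_q) = 0.
Proof.
rewrite /vnorm big1 ?sqrtr0 // => i _; by rewrite mxE cmod0 expr0n.
Qed.

Lemma vnorm_sum q (I : finType) (P : pred I) (F : I -> 'cV[C]_q) :
  vnorm (\sum_(i | P i) F i) <= \sum_(i | P i) vnorm (F i).
Proof.
apply: (big_ind2 (fun v r => vnorm v <= r)).
- by rewrite vnorm0.
- move=> x1 x2 y1 y2 h1 h2; apply: (le_trans _ (lerD h1 h2)); exact: vnormD.
- by [].
Qed.

Lemma vnorm_eq0 q (x : 'cV[C]_q) : vnorm x = 0 -> x = 0.
Proof.
move=> /eqP; rewrite sqrtr_eq0 => h.
have S0 : \sum_i cmod (x i 0) ^+ 2 = 0.
  by apply/eqP; rewrite eq_le h sumr_ge0 // => i _; exact: sqr_ge0.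
apply/matrixP => i j; rewrite (ord1 j) mxE; apply: cmod_eq0.
apply/eqP; rewrite -sqrf_eq0; apply/eqP.
exact: (@psumr_eq0P _ _ xpredT (fun i => cmod (x i 0) ^+ 2) (fun i _ => sqr_ge0 _) S0 i isT).
Qed.

Lemma cmod_entry_le q (x : 'cV[C]_q) i : cmod (x i 0) <= vnorm x.
Proof.
rewrite -[cmod _]ger0_norm ?cmod_ge0 // -sqrtr_sqr ler_sqrt; last first.
  by apply: sumr_ge0 => j _; exact: sqr_ge0.
rewrite (bigD1 i) //= lerDl; apply: sumr_ge0 => j _; exact: sqr_ge0.
Qed.

Lemma vnorm_mxcol (p : nat) (p_ : 'I_p -> nat) (B_ : forall i, 'cV[C]_(p_ i)) :
  vnorm (\mxcol_i B_ i) ^+ 2 = \sum_i vnorm (B_ i) ^+ 2.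
Proof.
rewrite vnorm_sqr; under [RHS]eq_bigr do rewrite vnorm_sqr.
rewrite sig_big_dep /= (reindex _ tagnat.sig_bij_on) /=.
by apply: eq_bigr => l _; rewrite !mxE.
Qed.

End Vec.

Local Open Scope classical_set_scope.

Section Op.
Context {R : realType}.
Local Notation C := R[i].

Lemma mul_col_sum p q (M : 'M[C]_(p, q)) (x : 'cV[C]_q) :
  M *m x = \sum_j x j 0 *: col j M.
Proof.
apply/matrixP => i k; rewrite (ord1 k) !mxE summxE; apply: eq_bigr => j _.
by rewrite !mxE mulrC.
Qed.

Lemma opnorm_bnd p q (M : 'M[C]_(p, q)) :
  exists c, forall x : 'cV[C]_q, vnorm x <= 1 -> vnorm (M *m x) <= c.
Proof.
exists (\sum_j vnorm (col j M)) => x x1.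
rewrite mul_col_sum; apply: (le_trans (vnorm_sum _ _ _ _)).
apply: ler_sum => j _; rewrite vnormZ -[X in _ <= X]mul1r ler_wpM2r ?vnorm_ge0 //.
exact: le_trans (cmod_entry_le _ _ _) x1.
Qed.

Lemma opnorm_has_sup p q (M : 'M[C]_(p, q)) :
  has_sup [set vnorm (M *m x) | x in [set x : 'cV[C]_q | vnorm x <= 1]].
Proof.
split.
  exists (vnorm (M *m 0)), 0 => //=; by rewrite vnorm0 ler01.
have [c Hc] := opnorm_bnd _ _ M.
exists c => _ [x /= x1 <-]; exact: Hc.
Qed.

Lemma opnorm_ge0 p q (M : 'M[C]_(p, q)) : 0 <= opnorm M.
Proof.
have h := sup_upper_bound (opnorm_has_sup _ _ M).
have : vnorm (M *m 0) <= opnorm M.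
  by apply: h; exists 0 => //=; rewrite vnorm0 ler01.
by rewrite mulmx0 vnorm0.
Qed.

Lemma opnorm_ub p q (M : 'M[C]_(p, q)) (x : 'cV[C]_q) :
  vnorm (M *m x) <= opnorm M * vnorm x.
Proof.
have [x0|xn0] := eqVneq (vnorm x) 0.
  by rewrite x0 (vnorm_eq0 _ _ x0) mulmx0 vnorm0 mulr0.
have t0 : 0 < vnorm x by rewrite lt_def xn0 vnorm_ge0.
set t := vnorm x in t0 xn0 *.
set x' := ((t^-1)%:C)%C *: x.
have ct : cmod ((t^-1)%:C)%C = t^-1 by rewrite cmod_real // invr_ge0 ltW.
have x'1 : vnorm x' <= 1 by rewrite vnormZ ct mulVf.
have h := sup_upper_bound (opnorm_has_sup _ _ M).
have : vnorm (M *m x') <= opnorm M by apply: h; exists x'.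
have -> : vnorm (M *m x') = t^-1 * vnorm (M *m x) by rewrite -scalemxAr vnormZ ct.
by rewrite mulrC ler_pdivrMr.
Qed.

Lemma opnorm_le p q (M : 'M[C]_(p, q)) (c : R) : 0 <= c ->
  (forall x, vnorm (M *m x) <= c * vnorm x) -> opnorm M <= c.
Proof.
move=> c0 H; apply: ge_sup; first by exists (vnorm (M *m 0)), 0 => //=; rewrite vnorm0 ler01.
move=> _ [x /= x1 <-]; apply: (le_trans (H x)).
by rewrite -[X in _ <= X]mulr1 ler_wpM2l.
Qed.

End Op.

Section Jordan.
Context {R : realType}.
Local Notation C := R[i].

Definition Nl (K : nat) : 'M[C]_K.+1 := \matrix_(a, b) ((b == a.+1 :> nat)%:R).

Lemma jb_split (lam : C) K : jordan_block lam K.+1 = lam%:M + Nl K.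
Proof.
apply/matrixP => a b; rewrite !mxE.
case: (eqVneq a b) => [->|ab]; first by rewrite eqxx /= (_ : (b == b.+1 :> nat) = false) ?addr0 //; elim: (nat_of_ord b).
rewrite mulr0n add0r.
have -> : (a == b :> nat) = false by apply/negbTE; apply: contra ab => /eqP h; apply/eqP/val_inj.
by case: (b == a.+1 :> nat).
Qed.

Lemma Nl_mul K (v : 'cV[C]_K.+1) a :
  (Nl K *m v) a 0 = if (a.+1 < K.+1)%N then v (inord a.+1) 0 else 0.
Proof.
rewrite mxE; case: ifP => h.
  rewrite (bigD1 (inord a.+1)) //= mxE inordK // eqxx mul1r big1 ?addr0 //.
  move=> b bn; rewrite mxE; case: eqP => [hb|]; last by rewrite mul0r.
  by exfalso; move/negP: bn; apply; apply/eqP/val_inj; rewrite /= inordK.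
apply: big1 => b _; rewrite mxE; case: eqP => [hb|]; last by rewrite mul0r.
by exfalso; move: (ltn_ord b); rewrite hb h.
Qed.

Lemma Nl_norm K (v : 'cV[C]_K.+1) : vnorm (Nl K *m v) <= vnorm v.
Proof.
rewrite /vnorm ler_sqrt; last by apply: sumr_ge0 => i _; exact: sqr_ge0.
rewrite big_ord_recr /= Nl_mul ltnn cmod0 expr0n addr0.
rewrite [X in _ <= X]big_ord_recl /=; apply: ler_wpDl; first exact: sqr_ge0.
apply: ler_sum => i _; rewrite Nl_mul /= ltnS ltn_ord.
suff -> : (inord i.+1 : 'I_K.+1) = lift ord0 i by [].
by apply: val_inj; rewrite /= inordK // ltnS ltn_ord.
Qed.

Lemma Nl_pow_entry K i (v : 'cV[C]_K.+1) a :
  (Nl K ^+ i *m v) a 0 = if (a + i < K.+1)%N then v (inord (a + i)) 0 else 0.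
Proof.
elim: i a => [|i IH] a.
  by rewrite expr0 mul1mx addn0 ltn_ord inord_val.
rewrite exprS -mulmxE -mulmxA Nl_mul.
case: ifP => h.
  rewrite IH inordK // addSnnS; by [].
case: ifP => // h2; exfalso.
have : (a.+1 < K.+1)%N by apply: leq_ltn_trans h2; rewrite addnS ltnS leq_addr.
by rewrite h.
Qed.

Lemma Nl_pow_norm K i (v : 'cV[C]_K.+1) :
  vnorm (Nl K ^+ i *m v) <= (i < K.+1)%:R * vnorm v.
Proof.
case: (ltnP i K.+1) => h.
  rewrite mul1r; elim: i h => [|i IH] h; first by rewrite expr0 mul1mx.
  rewrite exprS -mulmxE -mulmxA; apply: (le_trans (Nl_norm _ _)).
  by apply: IH; apply: ltnW.
have -> : Nl K ^+ i *m v = 0.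
  apply/matrixP => a b; rewrite (ord1 b) Nl_pow_entry mxE.
  by rewrite ltnNge (leq_trans h) // leq_addl.
by rewrite vnorm0 mul0r.
Qed.

Lemma scalar_exp K (a : C) n : (a%:M : 'M[C]_K.+1) ^+ n = (a ^+ n)%:M.
Proof.
elim: n => [|n IH]; first by rewrite !expr0.
by rewrite !exprS IH -mulmxE -scalar_mxM.
Qed.

Lemma jb_pow (lam : C) K j (w : 'cV[C]_K.+1) :
  jordan_block lam K.+1 ^+ j *m w =
  \sum_(i < j.+1) (('C(j, i)%:R * lam ^+ (j - i)) *: (Nl K ^+ i *m w)).
Proof.
rewrite jb_split exprDn_comm; last first.
  by rewrite /GRing.comm -!mulmxE scalar_mxC.
rewrite mulmx_suml; apply: eq_bigr => i _.
rewrite -scaler_nat -scalemxAl scalar_exp -mulmxE mul_scalar_mx -scalemxAl.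
by rewrite scalerA.
Qed.

Lemma jb_pow_norm (lam : C) K j (w : 'cV[C]_K.+1) :
  vnorm (jordan_block lam K.+1 ^+ j *m w) <= acoef (cmod lam) K.+1 j * vnorm w.
Proof.
rewrite jb_pow /acoef mulr_suml; apply: (le_trans (vnorm_sum _ _ _ _)).
apply: ler_sum => i _; rewrite vnormZ cmodM cmod_nat cmodX -[X in _ <= X]mulrA.
apply: ler_wpM2l; first by rewrite mulr_ge0 ?exprn_ge0 ?cmod_ge0 ?ler0n.
exact: Nl_pow_norm.
Qed.

Lemma block_bound (lam : C) K N (w : 'I_N -> 'cV[C]_K.+1) :
  cmod lam <= 1 -> (0 < N)%N ->
  vnorm (\sum_(j < N) jordan_block lam K.+1 ^+ j *m w j) <=
    Mbound K.+1 lam N * Num.sqrt (\sum_j vnorm (w j) ^+ 2).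
Proof.
move=> l1 N0.
apply: (le_trans (vnorm_sum _ _ _ _)).
apply: (le_trans (y := \sum_(j < N) acoef (cmod lam) K.+1 j * vnorm (w j))).
  by apply: ler_sum => j _; exact: jb_pow_norm.
apply: (le_trans (CS_sqrt _ (fun j : 'I_N => acoef (cmod lam) K.+1 j) (fun j => vnorm (w j)))).
by rewrite ler_wpM2r ?sqrtr_ge0 // Mbound_bound.
Qed.

End Jordan.

Section Multi.
Context {R : realType}.
Local Notation C := R[i].

Lemma bigmax_seq (I : eqType) (s : seq I) (F : I -> R) :
  0 <= \big[Num.max/0]_(j <- s) F j /\
  forall i, i \in s -> F i <= \big[Num.max/0]_(j <- s) F j.
Proof.
elim: s => [|a s [IH0 IH]]; first by rewrite big_nil.
rewrite big_cons; split; first by rewrite le_max IH0 orbT.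
move=> i; rewrite in_cons => /orP[/eqP ->|hi]; first by rewrite le_max lexx.
by rewrite le_max IH ?orbT.
Qed.

Lemma K2_ge0 r (lam : 'I_r -> C) (k : 'I_r -> nat) N : 0 <= K2 lam k N.
Proof. exact: (bigmax_seq _ (index_enum 'I_r) (fun i => Mbound (k i) (lam i) N)).1. Qed.

Lemma K2_ub r (lam : 'I_r -> C) (k : 'I_r -> nat) N i :
  Mbound (k i) (lam i) N <= K2 lam k N.
Proof.
exact: (bigmax_seq _ (index_enum 'I_r) (fun i => Mbound (k i) (lam i) N)).2 i (mem_index_enum i).
Qed.

Lemma block_bound' (lam : C) kk N (w : 'I_N -> 'cV[C]_kk) :
  (0 < kk)%N -> cmod lam <= 1 -> (0 < N)%N ->
  vnorm (\sum_(j < N) jordan_block lam kk ^+ j *m w j) <=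
    Mbound kk lam N * Num.sqrt (\sum_j vnorm (w j) ^+ 2).
Proof. case: kk w => // K w _; exact: block_bound. Qed.

Lemma Mbound_ge0 (lam : C) kk N : (0 < kk)%N -> cmod lam <= 1 -> (0 < N)%N ->
  0 <= Mbound kk lam N.
Proof.
case: kk => // K _ l1 N0; apply: le_trans (Mbound_bound _ _ _ l1 N0).
exact: sqrtr_ge0.
Qed.

Lemma mul_mxdiag (p : nat) (p_ : 'I_p -> nat) (A_ B_ : forall i, 'M[C]_(p_ i)) :
  \mxdiag_i A_ i *m \mxdiag_i B_ i = \mxdiag_i (A_ i *m B_ i).
Proof.
rewrite {2}/mxdiag mul_mxdiag_mxblock /mxdiag; apply: eq_mxblock => i j.
by case: eqVneq => [->|]; rewrite ?conform_mx_id ?mulmx0.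
Qed.

Lemma mxdiag_exp (p : nat) (p_ : 'I_p -> nat) (B_ : forall i, 'M[C]_(p_ i)) n :
  (\mxdiag_i B_ i) ^+ n = \mxdiag_i (B_ i ^+ n).
Proof.
elim: n => [|n IH].
  rewrite expr0; under eq_mxdiag do rewrite expr0.
  by rewrite mxdiagZ.
by rewrite !exprS IH -mulmxE mul_mxdiag; under [RHS]eq_mxdiag do rewrite exprS -mulmxE.
Qed.

End Multi.

Section Multi2.
Context {R : realType}.
Local Notation C := R[i].

Lemma jordan_bound r (lam : 'I_r -> C) (k : 'I_r -> nat) N
  (y : 'I_N -> 'cV[C]_(\sum_i k i)) :
  (forall i, (0 < k i)%N) -> (forall i, cmod (lam i) <= 1) -> (0 < N)%N ->
  vnorm (\sum_(j < N) jordan_mx lam k ^+ j *m y j) <=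
    K2 lam k N * Num.sqrt (\sum_j vnorm (y j) ^+ 2).
Proof.
move=> kp l1 N0.
pose S i := \sum_(j < N) vnorm (submxcol (y j) i) ^+ 2.
have S0 : forall i, 0 <= S i by move=> i; apply: sumr_ge0 => j _; exact: sqr_ge0.
have E : \sum_(j < N) jordan_mx lam k ^+ j *m y j =
   \mxcol_i (\sum_(j < N) jordan_block (lam i) (k i) ^+ j *m submxcol (y j) i).
  rewrite mxcol_sum; apply: eq_bigr => j _.
  by rewrite /jordan_mx mxdiag_exp -{1}[y j]submxcolK mul_mxdiag_mxcol.
have Sy : \sum_j vnorm (y j) ^+ 2 = \sum_i S i.
  rewrite /S exchange_big /=; apply: eq_bigr => j _.
  by rewrite -(vnorm_mxcol _ _ (fun i => submxcol (y j) i)) submxcolK.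
have K0 := K2_ge0 _ lam k N.
rewrite E Sy -[vnorm _]ger0_norm ?vnorm_ge0 // -sqrtr_sqr.
apply: sqrt_le_sum; first by rewrite mulr_ge0 ?sqrtr_ge0.
rewrite vnorm_mxcol exprMn sqr_sqrtr ?sumr_ge0 // mulr_sumr.
apply: ler_sum => i _.
have hb := block_bound' _ _ _ (fun j => submxcol (y j) i) (kp i) (l1 i) N0.
have M0 := Mbound_ge0 _ _ _ (kp i) (l1 i) N0.
apply: (le_trans (y := (Mbound (k i) (lam i) N * Num.sqrt (S i)) ^+ 2)).
  by apply: lerXn2r; rewrite ?nnegrE ?vnorm_ge0 ?mulr_ge0 ?sqrtr_ge0.
rewrite exprMn sqr_sqrtr // ler_wpM2r //.
by apply: lerXn2r; rewrite ?nnegrE // K2_ub.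
Qed.

End Multi2.

Local Open Scope classical_set_scope.

Section Spec.
Context {R : realType}.
Local Notation C := R[i].

Lemma cmod_sum (I : finType) (F : I -> C) : cmod (\sum_i F i) <= \sum_i cmod (F i).
Proof.
apply: (big_ind2 (fun v r => cmod v <= r)); first by rewrite cmod0.
  by move=> x1 x2 y1 y2 h1 h2; apply: (le_trans (cmodD _ _)); exact: lerD.
by [].
Qed.

Lemma eig_bound d (A : 'M[C]_d) a : eigenvalue A a ->
  cmod a <= \sum_s \sum_t cmod (A s t).
Proof.
move=> /eigenvalueP [v vA vn0].
set c := \sum_s \sum_t cmod (A s t).
set L := \sum_t cmod (v 0 t).
have L0 : 0 < L.
  rewrite lt_def sumr_ge0 ?andbT; last by move=> t _; exact: cmod_ge0.
  apply/eqP => L0; move/eqP: vn0; apply; apply/matrixP => i t.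
  rewrite (ord1 i) mxE; apply: cmod_eq0.
  exact: (@psumr_eq0P _ _ xpredT (fun t => cmod (v 0 t)) (fun t _ => cmod_ge0 _) L0 t isT).
rewrite -(ler_pM2r L0).
have -> : cmod a * L = \sum_t cmod ((v *m A) 0 t).
  rewrite vA mulr_sumr; apply: eq_bigr => t _; by rewrite mxE cmodM.
apply: (le_trans (y := \sum_t \sum_s cmod (v 0 s) * cmod (A s t))).
  apply: ler_sum => t _; rewrite mxE; apply: (le_trans (cmod_sum _ _)).
  by apply: ler_sum => s _; rewrite cmodM.
rewrite exchange_big /= /L mulr_suml; apply: ler_sum => s _.
rewrite -mulr_sumr [X in _ <= X]mulrC; apply: ler_pM => //.
- exact: cmod_ge0.
- by apply: sumr_ge0 => t _; exact: cmod_ge0.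
- rewrite (bigD1 s) //= lerDl; apply: sumr_ge0 => s' _.
  exact: cmod_ge0.
Qed.

Lemma mxrowZ (q : nat) (q_ : 'I_q -> nat) m (c : C) (B_ : forall j, 'M[C]_(m, q_ j)) :
  \mxrow_j (c *: B_ j) = c *: \mxrow_j B_ j.
Proof. by apply/matrixP => a b; rewrite !mxE. Qed.

Lemma jordan_eig r (lam : 'I_r -> C) (k : 'I_r -> nat) i : (0 < k i)%N ->
  exists2 v : 'rV[C]_(\sum_i k i), v *m jordan_mx lam k = lam i *: v & v != 0.
Proof.
move=> ki.
pose R_ j : 'rV[C]_(k j) := \row_(b < k j) (((j == i) && (b == (k j).-1 :> nat))%:R).
exists (\mxrow_j R_ j).
  rewrite /jordan_mx mul_mxrow_mxdiag -mxrowZ; apply: eq_mxrow => j.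
  apply/matrixP => a b; rewrite (ord1 a) !mxE.
  have -> : \sum_a0 R_ j 0 a0 * jordan_block (lam j) (k j) a0 b =
            \sum_a0 (a0 == b)%:R * (lam j * ((j == i) && (b == (k j).-1 :> nat))%:R).
    apply: eq_bigr => a0 _; rewrite !mxE.
    case: (eqVneq j i) => [ji|ji]; last by rewrite /= ?mulr0n ?mul0r ?mulr0.
    rewrite /=; case: (eqVneq (a0 : nat) (k j).-1) => [ha|ha].
      rewrite mul1r ha.
      have hb : (b == ((k j).-1).+1 :> nat) = false.
        by apply/negbTE; rewrite neq_ltn prednK ?ltn_ord // ji.
      rewrite hb; case: (eqVneq a0 b) => [<-|ab]; first by rewrite ha !eqxx mul1r mulr1.
      have -> : ((k j).-1 == b :> nat) = false.
        by apply/negbTE; rewrite -ha; apply: contra ab => /eqP h; apply/eqP/val_inj.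
      by rewrite /= ?mulr0n ?mul0r.
    rewrite mul0r; case: (eqVneq a0 b) => [<-|]; last by rewrite mul0r.
    by rewrite (negbTE ha) /= ?mulr0n ?mulr0.
  rewrite (bigD1 b) //= eqxx mul1r big1 ?addr0; last by move=> a0 /negbTE ->; rewrite mul0r.
  case: (eqVneq j i) => [ji|ji]; last by rewrite /= ?mulr0n ?mulr0.
  by rewrite (_ : lam j = lam i) // ji.
apply/eqP => /(congr1 (fun M => submxrow M i)); rewrite mxrowK submxrow0.
have hl : ((k i).-1 < k i)%N by rewrite ltn_predL.
move/matrixP => /(_ 0 (Ordinal hl)).
rewrite !mxE eqxx /= eqxx => /eqP; by rewrite oner_eq0.
Qed.

End Spec.

Local Open Scope classical_set_scope.

Section Final.
Context {R : realType}.
Local Notation C := R[i].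

Lemma lam_le1 r (lam : 'I_r -> C) (k : 'I_r -> nat) (A S : 'M[C]_(\sum_(i < r) k i)) :
  (forall i, (0 < k i)%N) -> S \in unitmx ->
  A = S *m jordan_mx lam k *m invmx S -> spectral_radius A <= 1 ->
  forall i, cmod (lam i) <= 1.
Proof.
move=> kp Su hA hs i.
have [v vJ vn0] := jordan_eig _ lam k i (kp i).
set w := v *m invmx S.
have ew : eigenvalue A (lam i).
  apply/eigenvalueP; exists w.
    rewrite hA /w !mulmxA (mulmxKV Su) vJ -scalemxAl; by [].
  apply: contra vn0 => /eqP w0; apply/eqP.
  by rewrite -(mulmxKV Su v) -/w w0 mul0mx.
apply: le_trans hs.
apply: sup_upper_bound; last by exists (lam i).
split; first by exists (cmod (lam i)), (lam i).
exists (\sum_s \sum_t cmod (A s t)) => _ [a ea <-].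
exact: eig_bound.
Qed.

End Final.

Lemma Apow (R : realType) d (A S Jm : 'M[R[i]]_d) j : S \in unitmx ->
  A = S *m Jm *m invmx S -> A ^+ j = S *m Jm ^+ j *m invmx S.
Proof.
move=> Su hA; elim: j => [|j IH].
  by rewrite !expr0 mulmx1 mulmxV.
rewrite exprS IH -mulmxE hA !mulmxA (mulmxKV Su) exprS -mulmxE !mulmxA.
by [].
Qed.

Lemma sq_eq_norm (R : realType) (a b : R) : 0 <= a -> 0 <= b -> a ^+ 2 = b ^+ 2 -> a = b.
Proof.
move=> a0 b0 h; by rewrite -(ger0_norm a0) -(ger0_norm b0) -!sqrtr_sqr h.
Qed.

Theorem proposition16 (R : realType) (r : nat) (lam : 'I_r -> R[i])
  (k : 'I_r -> nat) (m p : nat)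
  (A : 'M[R[i]]_(\sum_(i < r) k i))
  (S : 'M[R[i]]_(\sum_(i < r) k i))
  (B : 'M[R[i]]_(\sum_(i < r) k i, m))
  (Cm : 'M[R[i]]_(p, \sum_(i < r) k i))
  (D : 'M[R[i]]_(p, m)) :
  (forall i, (0 < k i)%N) ->
  S \in unitmx ->
  A = S *m jordan_mx lam k *m invmx S ->
  spectral_radius A <= 1 ->
  forall n : nat, (1 <= n)%N ->
    opnorm (markov_mx n A B Cm D) <= opnorm (markov_mx n.+1 A B Cm D) /\
    opnorm (markov_mx n.+1 A B Cm D) <=
      opnorm D + opnorm (invmx S *m B) * opnorm (Cm *m S) * K2 lam k n.
Proof.
move=> kp Su hA hs n n1.
have l1 := lam_le1 _ _ _ _ _ kp Su hA hs.
split.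
  apply: opnorm_le; first exact: opnorm_ge0.
  move=> x.
  pose x' : 'cV[R[i]]_(\sum_(j < n.+1) m) :=
    \mxcol_(j < n.+1) (if unlift ord_max j is Some j' then submxcol x j' else 0).
  have hu : forall j : 'I_n, unlift ord_max (widen_ord (leqnSn n) j) = Some j.
    move=> j; rewrite (_ : widen_ord _ j = lift ord_max j) ?liftK //.
    by apply: val_inj; rewrite /= /bump leqNgt ltn_ord.
  have e1 : markov_mx n.+1 A B Cm D *m x' = markov_mx n A B Cm D *m x.
    rewrite /markov_mx mul_mxrow_mxcol -{2}[x]submxcolK mul_mxrow_mxcol.
    rewrite big_ord_recr /= unlift_none mulmx0 addr0.
    by apply: eq_bigr => j _; rewrite hu.
  have e2 : vnorm x' = vnorm x.
    apply: sq_eq_norm; rewrite ?vnorm_ge0 //.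
    rewrite vnorm_mxcol -{2}[x]submxcolK vnorm_mxcol big_ord_recr /= unlift_none vnorm0.
    by rewrite expr0n /= addr0; apply: eq_bigr => j _; rewrite hu.
  by rewrite -e1 -e2; exact: opnorm_ub.
set nD := opnorm D; set nB := opnorm (invmx S *m B); set nC := opnorm (Cm *m S).
set k2 := K2 lam k n.
have nD0 : 0 <= nD by exact: opnorm_ge0.
have nB0 : 0 <= nB by exact: opnorm_ge0.
have nC0 : 0 <= nC by exact: opnorm_ge0.
have k20 : 0 <= k2 by exact: K2_ge0.
apply: opnorm_le; first by rewrite addr_ge0 // !mulr_ge0.
move=> x.
set xb := fun j => submxcol x j.
pose y := fun j : 'I_n => (invmx S *m B) *m xb (lift ord0 j).
have ex : markov_mx n.+1 A B Cm D *m x =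
    D *m xb ord0 + (Cm *m S) *m (\sum_(j < n) jordan_mx lam k ^+ j *m y j).
  rewrite /markov_mx -{1}[x]submxcolK mul_mxrow_mxcol big_ord_recl /=.
  congr (_ + _); rewrite mulmx_sumr; apply: eq_bigr => j _.
  rewrite add0n (@Apow R _ A S _ j Su hA) /y /xb !mulmxA; by [].
set V := \sum_(j < n) vnorm (xb (lift ord0 j)) ^+ 2.
have V0 : 0 <= V by apply: sumr_ge0 => j _; exact: sqr_ge0.
have ex2 : vnorm x ^+ 2 = vnorm (xb ord0) ^+ 2 + V.
  by rewrite -{1}[x]submxcolK vnorm_mxcol big_ord_recl.
have hu : vnorm (xb ord0) <= vnorm x.
  apply: (le_trans (y := Num.sqrt (vnorm x ^+ 2))); last by rewrite sqrtr_sqr ger0_norm ?vnorm_ge0.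
  rewrite -[X in X <= _]ger0_norm ?vnorm_ge0 // -sqrtr_sqr ler_sqrt ?sqr_ge0 // ex2 lerDl //.
have hv : Num.sqrt V <= vnorm x.
  apply: (le_trans (y := Num.sqrt (vnorm x ^+ 2))); last by rewrite sqrtr_sqr ger0_norm ?vnorm_ge0.
  by rewrite ler_sqrt ?sqr_ge0 // ex2 lerDr ?sqr_ge0.
have hy : Num.sqrt (\sum_j vnorm (y j) ^+ 2) <= nB * Num.sqrt V.
  rewrite -[nB]ger0_norm // -sqrtr_sqr -sqrtrM ?sqr_ge0 // ler_sqrt ?mulr_ge0 ?sqr_ge0 //.
  rewrite /V mulr_sumr; apply: ler_sum => j _.
  rewrite -exprMn; apply: lerXn2r; rewrite ?nnegrE ?vnorm_ge0 ?mulr_ge0 ?vnorm_ge0 //.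
  exact: opnorm_ub.
have hz := jordan_bound _ _ _ _ y kp l1 n1.
rewrite ex; apply: (le_trans (vnormD _ _ _)).
rewrite mulrDl; apply: lerD.
  apply: (le_trans (opnorm_ub _ _ _ _)); exact: ler_wpM2l.
apply: (le_trans (opnorm_ub _ _ _ _)).
rewrite -/nC.
apply: (le_trans (y := nC * (k2 * (nB * vnorm x)))); last by rewrite le_eqVlt; apply/orP; left; apply/eqP; ring.
apply: ler_wpM2l => //; apply: (le_trans hz); apply: ler_wpM2l => //.
apply: (le_trans hy); exact: ler_wpM2l.
Qed.
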